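(* Let $(M,S)$ be a covered map where $M$ is bipartite, and let $(M,(I,O))=\Delta(M,S)$. The orientation $(I,O)$ is the geodesic orientation of $M$ if and only if $M_{|S}$ is the rightmost BFS tree of $M$.
   Context: Permutations compose right to left. A map is $M=(H,\sigma,\alpha)$, $H$ finite, $\alpha$ fixed-point-free involution, $\sigma$ permutation (its cycles give the counterclockwise order of half-edges around each vertex), $\langle\sigma,\alpha\rangle$ transitive, root $r\in H$; $\phi=\sigma\alpha$. $\pi_{|S}$ is obtained from the cycles of $\pi$ by erasing elements not in $S$. A covered map is $(M,S)$ with $S$ stable by $\alpha$ and $M_{|S}=(S,\sigma_{|S},\alpha_{|S})$ a connecting unicellular map ($\sigma_{|S},\alpha_{|S}$ transitive on $S$, $S$ meets every cycle of $\sigma$ — $S=\emptyset$ allowed if $\sigma$ has one cycle — and $\sigma_{|S}\alpha_{|S}$ cyclic). The motion function $\theta(h)=\sigma\alpha(h)$ ($h\in S$), $\sigma(h)$ ($h\notin S$) is cyclic and gives the order $r\prec_S\theta(r)\prec_S\cdots\prec_S\theta^{|H|-1}(r)$. $\Delta(M,S)=(M,(I,O))$ with $I=\{h\in S:\alpha(h)\prec_S h\}\cup\{h\notin S:h\prec_S\alpha(h)\}$, $O=H\setminus I$; an edge is oriented from the vertex of its half-edge in $O$ to the vertex of its half-edge in $I$. Let $d(v)$ be the graph distance from the root-vertex (vertex containing $r$). In a bipartite map adjacent vertices $u,v$ satisfy $|d(u)-d(v)|=1$; the geodesic orientation orients each edge from its endpoint with smaller $d$ to its endpoint with larger $d$ (so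 the ingoing half-edge is the one at the vertex with larger $d$). The rightmost BFS tree $T$ is built as follows: initially all vertices are alive and $T$ consists of the root-vertex only; repeatedly, take the alive vertex $v$ that has been in $T$ for the longest time, declare it dead, and inspect its half-edges in the counterclockwise order given by $\sigma$ — starting from $r$ if $v$ is the root-vertex, and otherwise starting from the half-edge following (under $\sigma$) the half-edge of $v$ on the tree edge joining $v$ to its parent — and whenever an inspected half-edge $h$ leads (via $\alpha(h)$) to a vertex not yet in $T$, add that vertex and the edge $\{h,\alpha(h)\}$ to $T$; stop when all vertices are dead. $M_{|S}$ being the rightmost BFS tree means $S$ is the set of half-edges of the edges of $T$. *)

(* Defs.v *)
From mathcomp Require Import all_boot.
From mathcomp Require Import perm.

Set Implicit Arguments.
Unset Strict Implicit.
Unset Printing Implicit Defensive.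

(* Half-edges form a finite type H; sigma, alpha are permutations of H.     *)
(* Vertices are the sigma-cycles, edges the alpha-cycles.                   *)

(* pi_{|S}(h): the first element of S among pi h, pi^2 h, ... (meaningful
   for h in S; pi^(order) h = h and order <= #|H|, so the list is nonempty) *)
Definition restr (H : finType) (p : H -> H) (S : {set H}) (h : H) : H :=
  head h [seq x <- traject p (p h) #|H| | x \in S].

Definition is_map (H : finType) (s a : {perm H}) : Prop :=
  [/\ (forall h, a (a h) = h), (forall h, a h != h) &
      (forall x y, connect (fun u v => (v == s u) || (v == a u)) x y)].

Definition connecting_unicellular (H : finType) (s a : {perm H}) (S : {set H})
  : Prop :=
  [/\ (forall h, exists2 h', h' \in S & fconnect s h h')
        \/ (S = set0 /\ forall x y, fconnect s x y),
      (forall x y, x \in S -> y \in S ->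
         connect (fun u v => (u \in S) &&
                   ((v == restr s S u) || (v == restr a S u))) x y) &
      (forall x y, x \in S -> y \in S ->
         fconnect (fun u => restr s S (restr a S u)) x y)].

Definition covered (H : finType) (s a : {perm H}) (S : {set H}) : Prop :=
  (forall h, (a h \in S) = (h \in S)) /\ connecting_unicellular s a S.

Definition theta (H : finType) (s a : {perm H}) (S : {set H}) (h : H) : H :=
  if h \in S then s (a h) else s h.

Definition precS (H : finType) (s a : {perm H}) (r : H) (S : {set H}) (x y : H)
  : bool := findex (theta s a S) r x < findex (theta s a S) r y.

Definition Iset (H : finType) (s a : {perm H}) (r : H) (S : {set H}) : {set H} :=
  [set h | ((h \in S) && precS s a r S (a h) h)
        || ((h \notin S) && precS s a r S h (a h))].

Definition reach (H : finType) (s a : {perm H}) (r : H) (n : nat) : {set H} :=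
  iter n (fun A => A :|: [set h | [exists h' in A, fconnect s (a h') h]])
       [set h | fconnect s r h].

Definition dist (H : finType) (s a : {perm H}) (r : H) (h : H) : nat :=
  find (fun n => h \in reach s a r n) (iota 0 #|H|).

Definition geo_in (H : finType) (s a : {perm H}) (r : H) : {set H} :=
  [set h | dist s a r (a h) < dist s a r h].

Definition bipartite (H : finType) (s a : {perm H}) : Prop :=
  exists c : H -> bool, (forall h, c (s h) = c h) /\ (forall h, c (a h) != c h).

(* State: (half-edges of vertices in T, half-edges of edges
   of T, newly discovered vertices). A vertex in the queue is represented by
   the half-edge from which its inspection starts. *)
Definition scan_step (H : finType) (s a : {perm H})
  (st : {set H} * {set H} * seq H) (h : H) : {set H} * {set H} * seq H :=
  let: (vis, T, nq) := st in
  if a h \in vis then st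
  else (vis :|: [set x | fconnect s (a h) x], T :|: [set h; a h],
        rcons nq (s (a h))).

Fixpoint bfs_loop (H : finType) (s a : {perm H}) (fuel : nat) (q : seq H)
  (vis T : {set H}) : {set H} :=
  match fuel, q with
  | 0, _ => T
  | _, [::] => T
  | n.+1, st :: q' =>
      let: (vis', T', nq) :=
         foldl (scan_step s a) (vis, T, [::]) (traject s st (order s st)) in
      bfs_loop s a n (q' ++ nq) vis' T'
  end.

Definition rbfs_tree (H : finType) (s a : {perm H}) (r : H) : {set H} :=
  bfs_loop s a #|H| [:: r] [set x | fconnect s r x] set0.

(* Main.v *)
Require Import Defs.
From mathcomp Require Import all_boot perm.

Set Implicit Arguments.
Unset Strict Implicit.
Unset Printing Implicit Defensive.

Fixpoint ltlex (u v : seq nat) : bool :=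
  match u, v with
  | [::], [::] => false
  | [::], _ :: _ => true
  | _ :: _, [::] => false
  | x :: u', y :: v' => (x < y) || ((x == y) && ltlex u' v')
  end.

Lemma ltlex_irr u : ltlex u u = false.
Proof. by elim: u => //= x u ->; rewrite ltnn eqxx. Qed.

Lemma ltlex_trans u v w : ltlex u v -> ltlex v w -> ltlex u w.
Proof.
elim: u v w => [|x u IH] [|y v] [|z w] //=.
case/orP=> [xy|/andP[/eqP-> uv]]; case/orP=> [yz|/andP[/eqP<- vw]].
- by rewrite (ltn_trans xy yz).
- by rewrite xy.
- by rewrite yz.
- by rewrite eqxx (IH _ _ uv vw) orbT.
Qed.

Lemma ltlex_asym u v : ltlex u v -> ltlex v u = false.
Proof.
move=> uv; apply/negP=> vu; have := ltlex_trans uv vu.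
by rewrite ltlex_irr.
Qed.

Lemma ltlex_catl w u v : ltlex (w ++ u) (w ++ v) = ltlex u v.
Proof. by elim: w => //= x w ->; rewrite ltnn eqxx. Qed.

Lemma ltlex_rcons u i : ltlex u (rcons u i).
Proof. by elim: u => //= x u ->; rewrite eqxx orbT. Qed.

Lemma ltlex_size u v x y : size u = size v -> ltlex u v -> ltlex (u ++ x) (v ++ y).
Proof.
elim: u v => [|p u IH] [|q v] //= [] /IH H.
by case/orP=> [->//|/andP[-> /H ->]]; rewrite orbT.
Qed.

Lemma ltlex_rcons2 u i j : ltlex (rcons u i) (rcons u j) = (i < j).
Proof. by rewrite -!cats1 ltlex_catl /=; case: ltngtP. Qed.

Lemma ltlex_up u i j : ltlex (rcons (rcons u i) j) (rcons u i.+1).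
Proof. by rewrite -!cats1 -catA ltlex_catl /= ltnSn. Qed.

Lemma ltlex_total u v : u != v -> ltlex u v || ltlex v u.
Proof.
elim: u v => [|x u IH] [|y v] //=.
case: (ltngtP x y) => //= ->; rewrite eqseq_cons eqxx /=.
by move/IH.
Qed.

Section Orb.
Variables (H : finType) (f : H -> H) (Wf : H -> seq nat) (r : H).
Hypothesis finj : injective f.
Hypothesis fW : forall h, f h != r -> ltlex (Wf h) (Wf (f h)).

Lemma orb_aux h k : fconnect f h r || ltlex (Wf h) (Wf (iter k.+1 f h)).
Proof.
elim: k => [|k IH] /=.
  case E: (f h == r); last by rewrite fW ?E ?orbT.
  by rewrite -(eqP E) fconnect1.
case/orP: IH => [->//|lt].
set z := iter k.+1 f h.
case E: (f z == r).
  by rewrite -(eqP E) /z -iterS fconnect_iter.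
by rewrite (ltlex_trans lt (fW (negbT E))) orbT.
Qed.

Lemma orb_all h : fconnect f r h.
Proof.
have := orb_aux h (order f h).-1; rewrite orderSpred (iter_order finj) ltlex_irr orbF.
by rewrite (fconnect_sym finj).
Qed.

Lemma order_all : order f r = #|H|.
Proof. by rewrite /order; apply: eq_card => x; rewrite !inE orb_all. Qed.

Lemma iter_ne_r t : 0 < t -> t < order f r -> iter t f r != r.
Proof.
move=> t0 tlt; apply/negP=> /eqP E.
by have := findex_iter tlt; rewrite E findex0 => E2; rewrite -E2 in t0.
Qed.

Lemma orb_mono t t' : t < t' -> t' < order f r ->
  ltlex (Wf (iter t f r)) (Wf (iter t' f r)).
Proof.
elim: t' => // t' IH; rewrite ltnS => tt' tlt.
have step : ltlex (Wf (iter t' f r)) (Wf (iter t'.+1 f r)).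
  by apply: fW; rewrite -iterS iter_ne_r.
move: tt'; rewrite leq_eqVlt => /orP[/eqP->//|lt].
exact: ltlex_trans (IH lt (ltnW tlt)) step.
Qed.

Lemma findex_lex x y : (findex f r x < findex f r y) = ltlex (Wf x) (Wf y).
Proof.
have fx := orb_all x; have fy := orb_all y.
apply/idP/idP => [lt|lt].
  rewrite -(iter_findex fx) -(iter_findex fy).
  exact: orb_mono lt (findex_max fy).
rewrite ltnNge; apply/negP; rewrite leq_eqVlt => /orP[/eqP E|lt2].
  by move: lt; rewrite -(iter_findex fx) -(iter_findex fy) E ltlex_irr.
have := orb_mono lt2 (findex_max fx).
by rewrite (iter_findex fx) (iter_findex fy) (ltlex_asym lt).
Qed.

End Orb.

Section BFS.
Variables (H : finType) (s a : {perm H}) (r : H).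

Fixpoint bfsD (fuel : nat) (q : seq H) (vis T : {set H}) (D : seq H)
  : {set H} * seq H :=
  match fuel, q with
  | 0, _ => (T, D)
  | _, [::] => (T, D)
  | n.+1, st :: q' =>
      let: (vis', T', nq) :=
         foldl (scan_step s a) (vis, T, [::]) (traject s st (order s st)) in
      bfsD n (q' ++ nq) vis' T' (rcons D st)
  end.

Lemma bfsD_fst n q vis T D : (bfsD n q vis T D).1 = bfs_loop s a n q vis T.
Proof.
elim: n q vis T D => [|n IH] [|st q] vis T D //=.
by case: (foldl _ _ _) => [[vis' T'] nq]; apply: IH.
Qed.

Definition R := froot s.

Lemma symS : connect_sym (frel s).
Proof. exact: fconnect_sym (@perm_inj _ s). Qed.

Lemma Req x y : (R x == R y) = fconnect s x y.
Proof. exact: root_connect symS x y. Qed.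

Lemma RP x y : reflect (R x = R y) (fconnect s x y).
Proof. by rewrite -Req; apply: eqP. Qed.

Lemma R_s x : R (s x) = R x.
Proof. by apply/esym/RP; apply: fconnect1. Qed.

Definition pos (L : seq H) z := index (R z) (map R L).
Definition hy y := a ((s^-1)%g y).
Definition idxL (L : seq H) z := findex s (nth r L (pos L z)) z.

Lemma pos_cat L1 L2 z : R z \in map R L1 -> pos (L1 ++ L2) z = pos L1 z.
Proof. by rewrite /pos map_cat index_cat => ->. Qed.

Lemma pos_lt L z : (pos L z < size L) = (R z \in map R L).
Proof. by rewrite /pos -(size_map R) index_mem. Qed.

Lemma idxL_cat L1 L2 z : R z \in map R L1 -> idxL (L1 ++ L2) z = idxL L1 z.
Proof.
move=> zin; rewrite /idxL pos_cat // nth_cat.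
by rewrite pos_lt zin.
Qed.

Lemma R_nth_pos L z : R z \in map R L -> R (nth r L (pos L z)) = R z.
Proof.
move=> zin; have hlt : pos L z < size L by rewrite pos_lt.
by rewrite -(nth_map r (R r)) // nth_index.
Qed.

Lemma pos_mem L y : y \in L -> R y \in map R L.
Proof. by move=> yL; apply: map_f. Qed.

Record Inv (D q : seq H) (vis T : {set H}) : Prop := {
  i_head : nth r (D ++ q) 0 = r /\ 0 < size (D ++ q);
  i_uniq : uniq (map R (D ++ q));
  i_vis : vis = [set x | R x \in map R (D ++ q)];
  i_T : forall x, (x \in T) = (s x \in behead (D ++ q)) || (s (a x) \in behead (D ++ q));
  i_5 : forall y, y \in behead (D ++ q) ->
          R (hy y) \in map R D /\ pos (D ++ q) (hy y) < pos (D ++ q) y;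
  i_6 : forall y x, y \in behead (D ++ q) -> R x = R y -> R (a x) \in map R D ->
          (pos (D ++ q) (hy y) < pos (D ++ q) (a x)) ||
          ((pos (D ++ q) (hy y) == pos (D ++ q) (a x)) &&
           (idxL (D ++ q) (hy y) <= idxL (D ++ q) (a x)));
  i_7 : forall y y', y \in behead (D ++ q) -> y' \in behead (D ++ q) ->
          pos (D ++ q) y < pos (D ++ q) y' ->
          (pos (D ++ q) (hy y) < pos (D ++ q) (hy y')) ||
          ((pos (D ++ q) (hy y) == pos (D ++ q) (hy y')) &&
           (idxL (D ++ q) (hy y) < idxL (D ++ q) (hy y')));
  i_8 : forall x, R x \in map R D -> a x \in vis
}.


Hypothesis aK : forall h, a (a h) = h.

Lemma hy_s_a h : hy (s (a h)) = h.
Proof. by rewrite /hy permK aK. Qed.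

Section Inner.
Variables (D q0 : seq H) (st : H) (vis0 T0 : {set H}).
Let L := D ++ st :: q0.
Let O := orbit s st.

Record Jnv (P : seq H) (vis T : {set H}) (nq : seq H) : Prop := {
  j_uniq : uniq (map R (L ++ nq));
  j_vis : vis = [set x | R x \in map R (L ++ nq)];
  j_T : forall x, (x \in T) = (s x \in behead (L ++ nq)) || (s (a x) \in behead (L ++ nq));
  j_4a : forall y, y \in nq -> hy y \in P;
  j_4b : forall i j, i < j -> j < size nq ->
           index (hy (nth r nq i)) O < index (hy (nth r nq j)) O;
  j_5 : forall x, x \in P -> a x \in vis;
  j_6 : forall y x, y \in nq -> R x = R y -> a x \in P -> index (hy y) O <= index (a x) O
}.

Lemma behead_Lcat u : behead (L ++ u) = behead L ++ u.
Proof. by rewrite /L; case: D. Qed.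

Lemma Jnv_step P h rest vis T nq :
  P ++ h :: rest = O -> Jnv P vis T nq ->
  let: (vis', T', nq') := scan_step s a (vis, T, nq) h in
  Jnv (rcons P h) vis' T' nq'.
Proof.
move=> PO J.
have uO : uniq (P ++ h :: rest) by rewrite PO /O orbit_uniq.
have hP : h \notin P.
  by move: uO; rewrite cat_uniq => /and3P[_ /hasPn/(_ h (mem_head _ _)) ? _].
have ixh : index h O = size P by rewrite -PO index_cat (negPf hP) /= eqxx addn0.
have ixP x : x \in P -> index x O = index x P.
  by move=> xP; rewrite -PO index_cat xP.
have ixPlt x : x \in P -> index x O < size P by move=> xP; rewrite ixP // index_mem.
case: J => J1 J2 J3 J4a J4b J5 J6 /=.
case: ifP => [ahv|ahv].
  split=> //.
  - by move=> y /J4a yP; rewrite mem_rcons inE yP orbT.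
  - by move=> x; rewrite mem_rcons inE => /orP[/eqP->//|/J5].
  - move=> y x yn Rxy; rewrite mem_rcons inE => /orP[/eqP->|/(J6 _ _ yn Rxy)//].
    by rewrite ixh ltnW // ixPlt // J4a.
set y := s (a h).
have hyy : hy y = h by rewrite /y hy_s_a.
have Ry : R y = R (a h) by rewrite /y R_s.
have Ryn : R y \notin map R (L ++ nq) by rewrite Ry; move: ahv; rewrite J2 inE => ->.
have Lne : L ++ rcons nq y = rcons (L ++ nq) y by rewrite rcons_cat.
split.
- by rewrite Lne map_rcons rcons_uniq Ryn J1.
- apply/setP=> x; rewrite !inE Lne map_rcons mem_rcons inE J2 inE orbC; congr (_ || _).
  by rewrite Ry eq_sym Req.
- move=> x; rewrite behead_Lcat !inE J3 behead_Lcat !mem_cat mem_rcons !inE.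
  rewrite /y !mem_rcons !inE !(inj_eq (@perm_inj _ s)) (inj_eq (@perm_inj _ a)).
  by case: (s x \in behead L); case: (s x \in nq); case: (s (a x) \in behead L); case: (s (a x) \in nq); case: (x == h); case: (x == a h).
- move=> z; rewrite mem_rcons inE => /orP[/eqP->|/J4a zP].
    by rewrite hyy mem_rcons mem_head.
  by rewrite mem_rcons inE zP orbT.
- move=> i j ij; rewrite size_rcons ltnS leq_eqVlt => /orP[/eqP ej|jlt].
    subst j; rewrite !nth_rcons ltnn eqxx ij hyy ixh.
    by rewrite ixPlt // J4a // mem_nth.
  by rewrite !nth_rcons jlt (ltn_trans ij jlt) J4b.
- move=> x; rewrite mem_rcons inE => /orP[/eqP->|/J5]; rewrite !inE.
    by rewrite connect0 orbT.
  by move=> ->.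
- move=> z x; rewrite mem_rcons inE => /orP[/eqP->|zn].
    rewrite hyy Ry => Rx; rewrite mem_rcons inE => /orP[/eqP->//|axP].
    have := J5 _ axP; rewrite aK J2 inE Rx.
    by move: ahv; rewrite J2 inE => ->.
  move=> Rxz; rewrite mem_rcons inE => /orP[/eqP->|axP]; last exact: J6.
  by rewrite ixh ltnW // ixPlt // J4a.
Qed.

Lemma Jnv_fold rest P vis T nq : P ++ rest = O -> Jnv P vis T nq ->
  let: (vis', T', nq') := foldl (scan_step s a) (vis, T, nq) rest in
  Jnv O vis' T' nq'.
Proof.
elim: rest P vis T nq => [|h rest IH] P vis T nq.
  by rewrite cats0 => <-.
move=> PO J; have := Jnv_step PO J.
change (foldl (scan_step s a) (vis, T, nq) (h :: rest)) with
  (foldl (scan_step s a) (scan_step s a (vis, T, nq) h) rest).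
case: (scan_step s a (vis, T, nq) h) => [[v1 T1] n1] J1.
by apply: (IH (rcons P h)) => //; rewrite cat_rcons.
Qed.

Lemma Jnv_init : Inv D (st :: q0) vis0 T0 -> Jnv [::] vis0 T0 [::].
Proof.
case=> _ U V TT _ _ _ _; constructor; rewrite ?cats0 //.
Qed.

Lemma inO x : (x \in O) = (R x == R st).
Proof. by rewrite /O -fconnect_orbit Req (fconnect_sym (@perm_inj _ s)). Qed.

Lemma Jnv_Inv vis T nq : Inv D (st :: q0) vis0 T0 -> Jnv O vis T nq ->
  Inv (rcons D st) (q0 ++ nq) vis T.
Proof.
move=> I J.
have EL : rcons D st ++ (q0 ++ nq) = L ++ nq by rewrite cat_rcons /L -catA.
case: I => [[Ih Ih2] Iu Iv IT I5 I6 I7 I8].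
case: J => [J1 J2 J3 J4a J4b J5 J6].
rewrite -/L in Ih Ih2 Iu Iv IT I5 I6 I7.
have RstD : R st \notin map R D.
  by move: Iu; rewrite /L map_cat cat_uniq /= => /and3P[_ /norP[]].
have RstL : R st \in map R L by rewrite /L map_cat mem_cat /= mem_head orbT.
have posst : pos (L ++ nq) st = size D.
  rewrite pos_cat // /pos /L map_cat index_cat (negPf RstD) /= eqxx addn0.
  by rewrite size_map.
have posR z : R z = R st -> pos (L ++ nq) z = size D by rewrite /pos => ->.
have nthD : nth r (L ++ nq) (size D) = st.
  by rewrite nth_cat /L size_cat /= addnS ltnS leq_addr nth_cat ltnn subnn.
have idxR z : R z = R st -> idxL (L ++ nq) z = index z O.
  by move=> Rz; rewrite /idxL posR // nthD.
have DL z : R z \in map R D -> R z \in map R L.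
  by rewrite /L map_cat mem_cat => ->.
have posD z : R z \in map R D -> pos (L ++ nq) z < size D.
  by move=> zD; rewrite pos_cat ?DL // /pos /L map_cat index_cat zD -(size_map R) index_mem.
have newL y : y \in nq -> R y \notin map R L.
  move=> yn; move: J1; rewrite map_cat cat_uniq => /and3P[_ /hasPn Hh _].
  by apply: Hh; apply: map_f.
have posnew y : y \in nq -> pos (L ++ nq) y = size L + index y nq.
  move=> yn; rewrite /pos map_cat index_cat (negPf (newL _ yn)) size_map.
  congr (_ + _); move: J1; rewrite map_cat cat_uniq => /and3P[_ _ un].
  by rewrite -{1}(nth_index r yn) -(nth_map r (R r)) ?index_mem // index_uniq // size_map index_mem.
have oldpos z : R z \in map R L -> pos (L ++ nq) z < size L.
  by move=> zL; rewrite pos_cat // pos_lt.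
have hyO y : y \in nq -> R (hy y) = R st by move=> yn; apply/eqP; rewrite -inO J4a.
have bL : behead (L ++ nq) = behead L ++ nq by rewrite /L; case: D.
have behL y : y \in behead L -> R y \in map R L.
  by move=> yb; apply: map_f; apply: mem_behead.
have pL z : R z \in map R L -> pos (L ++ nq) z = pos L z.
  by move=> zL; apply: pos_cat.
have iL z : R z \in map R L -> idxL (L ++ nq) z = idxL L z.
  by move=> zL; apply: idxL_cat.
split; rewrite ?EL.
- split; first by rewrite nth_cat Ih2.
  by rewrite size_cat addn_gt0 Ih2.
- exact: J1.
- exact: J2.
- exact: J3.
- move=> y; rewrite bL mem_cat => /orP[yb|yn].
    have [h1 h2] := I5 _ yb; split; first by rewrite map_rcons mem_rcons inE h1 orbT.
    by rewrite (pL _ (DL _ h1)) (pL _ (behL _ yb)).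
  rewrite map_rcons mem_rcons inE hyO // eqxx; split=> //.
  by rewrite posR ?hyO // posnew // /L size_cat /= addnS ltnS (leq_trans (leq_addr _ _) (leq_addr _ _)).
- move=> y x; rewrite bL mem_cat map_rcons mem_rcons inE => /orP[yb|yn] Rxy.
    case/orP=> [/eqP Rax|axD].
      by rewrite (posR (a x)) // posD // (I5 _ yb).1.
    have := I6 _ _ yb Rxy axD.
    by rewrite (pL _ (DL _ (I5 _ yb).1)) (pL _ (DL _ axD)) (iL _ (DL _ (I5 _ yb).1)) (iL _ (DL _ axD)).
  case/orP=> [/eqP Rax|axD].
    rewrite !posR ?hyO // eqxx ltnn /= !idxR ?hyO //.
    by apply: J6 => //; rewrite inO Rax.
  have := I8 _ axD; rewrite aK Iv inE Rxy => yL.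
  by rewrite (negPf (newL _ yn)) in yL.
- move=> y y'; rewrite bL !mem_cat => /orP[yb|yn] /orP[yb'|yn'].
  + have := I7 _ _ yb yb'.
    rewrite (pL _ (DL _ (I5 _ yb).1)) (pL _ (DL _ (I5 _ yb').1)) (pL _ (behL _ yb)) (pL _ (behL _ yb')).
    by rewrite (iL _ (DL _ (I5 _ yb).1)) (iL _ (DL _ (I5 _ yb').1)).
  + by move=> _; rewrite (posR (hy y')) ?hyO // posD // (I5 _ yb).1.
  + by rewrite (posnew _ yn) ltnNge ltnW // (leq_trans (oldpos _ (behL _ yb'))) // leq_addr.
  + rewrite (posnew _ yn) (posnew _ yn') ltn_add2l => ilt.
    rewrite !posR ?hyO // eqxx ltnn /= !idxR ?hyO //.
    have := J4b _ _ ilt; rewrite !nth_index //; apply; rewrite index_mem //.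
- move=> x; rewrite map_rcons mem_rcons inE => /orP[/eqP Rx|xD].
    by apply: J5; rewrite inO Rx.
  by have := I8 _ xD; rewrite Iv J2 !inE map_cat mem_cat => ->.
Qed.

End Inner.

Lemma size_uniqR (L : seq H) : uniq (map R L) -> size L <= #|H|.
Proof.
move=> u; rewrite -(size_map R) cardE; apply: uniq_leq_size => // x _.
by rewrite mem_enum.
Qed.

Lemma bfsD_inv n D q vis T : Inv D q vis T -> #|H| <= size D + n ->
  exists visf, Inv (bfsD n q vis T D).2 [::] visf (bfsD n q vis T D).1.
Proof.
elim: n D q vis T => [|n IH] D q vis T I.
  rewrite addn0 => HD; exists vis; suff E : q = [::] by move: I; rewrite E.
  have := size_uniqR (i_uniq I); rewrite size_cat.
  by case: q {I} => //= x q; rewrite addnS => Hs; move: (leq_trans Hs HD); rewrite ltnNge leq_addr.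
case: q I => [|st q0] I HD; first by exists vis.
rewrite /=; have J0 := Jnv_init I.
have := @Jnv_fold D q0 st (orbit s st) [::] vis T [::] (erefl _) J0.
rewrite /orbit.
case: (foldl _ _ _) => [[v1 T1] n1] J1.
apply: IH; first exact: Jnv_Inv I J1.
by rewrite size_rcons addSnnS.
Qed.

Lemma Inv_init : Inv [::] [:: r] [set x | fconnect s r x] set0.
Proof.
split => //=.
- apply/setP=> x; rewrite !inE Req (fconnect_sym (@perm_inj _ s)).
  by case: (fconnect s r x).
- by move=> x; rewrite inE.
Qed.

Lemma Inv_cover D vis T :
  (forall x y, connect (fun u v => (v == s u) || (v == a u)) x y) ->
  Inv D [::] vis T -> forall h, R h \in map R D.
Proof.
move=> conn I h.
have clos u v : (v == s u) || (v == a u) -> R u \in map R D -> R v \in map R D.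
  case/orP=> /eqP-> uD; first by rewrite R_s.
  by have := i_8 I uD; rewrite (i_vis I) inE cats0.
have rD : R r \in map R D.
  have [h1 h2] := i_head I; move: h1 h2; rewrite cats0.
  by case: (D) => //= x D' <- _; rewrite mem_head.
have /connectP [p pth ->] := conn r h.
elim: p r rD pth => //= v p IH u uD /andP[uv pth].
exact: IH (clos _ _ uv uD) pth.
Qed.

End BFS.

Section Tree.
Variables (H : finType) (s a : {perm H}) (r : H) (D : seq H) (T : {set H}).
Hypothesis aK : forall h, a (a h) = h.
Hypothesis afp : forall h, a h != h.
Variable c : H -> bool.
Hypothesis cs : forall h, c (s h) = c h.
Hypothesis ca : forall h, c (a h) != c h.

Local Notation R := (R s).
Local Notation hy := (hy s a).
Definition posD z := pos s D z.
Definition stv h := nth r D (posD h).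
Definition idx h := findex s (stv h) h.
Definition isroot h := posD h == 0.
Definition pe h := (s^-1)%g (stv h).
Definition ph h := a (pe h).

Hypothesis Hh : nth r D 0 = r.
Hypothesis Hsz : 0 < size D.
Hypothesis Hu : uniq (map R D).
Hypothesis Hc : forall h, R h \in map R D.
Hypothesis HT : forall x, (x \in T) = (s x \in behead D) || (s (a x) \in behead D).
Hypothesis H5 : forall y, y \in behead D -> posD (hy y) < posD y.
Hypothesis H6 : forall y x, y \in behead D -> R x = R y ->
  (posD (hy y) < posD (a x)) ||
  ((posD (hy y) == posD (a x)) && (idxL s r D (hy y) <= idxL s r D (a x))).
Hypothesis H7 : forall y y', y \in behead D -> y' \in behead D ->
  posD y < posD y' ->
  (posD (hy y) < posD (hy y')) ||
  ((posD (hy y) == posD (hy y')) && (idxL s r D (hy y) < idxL s r D (hy y'))).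

Lemma Rs x : R (s x) = R x. Proof. exact: R_s. Qed.

Lemma idxLE z : idxL s r D z = idx z.
Proof. by []. Qed.

Lemma uniqR_inj x y : x \in D -> y \in D -> R x = R y -> x = y.
Proof.
elim: (D) Hu => //= z D' IH /andP[zn un].
rewrite !inE => /orP[/eqP->|xD] /orP[/eqP->|yD] // Rxy.
- by move: zn; rewrite Rxy map_f.
- by move: zn; rewrite -Rxy map_f.
- exact: IH.
Qed.

Lemma Dcons : D = r :: behead D.
Proof. by move: Hh Hsz; case: (D) => //= x D' ->. Qed.

Lemma posD_lt h : posD h < size D.
Proof. by rewrite /posD pos_lt. Qed.

Lemma stv_in h : stv h \in D.
Proof. by rewrite /stv mem_nth // posD_lt. Qed.

Lemma R_stv h : R (stv h) = R h.
Proof. by rewrite /stv /posD (R_nth_pos r (Hc h)). Qed.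

Lemma posR x y : R x = R y -> posD x = posD y.
Proof. by rewrite /posD /pos => ->. Qed.

Lemma stvR x y : R x = R y -> stv x = stv y.
Proof. by rewrite /stv => /posR ->. Qed.

Lemma stv_D y : y \in D -> stv y = y.
Proof. by move=> yD; apply: uniqR_inj; rewrite ?stv_in ?R_stv. Qed.

Lemma posRE x y : posD x = posD y -> R x = R y.
Proof. by move=> E; rewrite -R_stv -(R_stv y) /stv E. Qed.

Lemma posr : posD r = 0.
Proof. by rewrite /posD /pos Dcons /= eqxx. Qed.

Lemma isrootE h : isroot h = (R h == R r).
Proof.
apply/idP/idP => [|/eqP /posR E]; last by rewrite /isroot E posr.
by rewrite /isroot => /eqP p0; apply/eqP/posRE; rewrite p0 posr.
Qed.

Lemma stv_root h : isroot h -> stv h = r.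
Proof. by rewrite /isroot /stv => /eqP ->. Qed.

Lemma stv_behead h : ~~ isroot h -> stv h \in behead D.
Proof.
rewrite /isroot /stv => p0; have := posD_lt h; rewrite {1 2}Dcons.
by case: (posD h) p0 => //= k _ klt; rewrite mem_nth.
Qed.

Lemma R_sinv z : R ((s^-1)%g z) = R z.
Proof. by rewrite -{2}(permKV s z) R_s. Qed.

Lemma R_pe h : R (pe h) = R h.
Proof. by rewrite /pe R_sinv R_stv. Qed.

Lemma s_pe h : s (pe h) = stv h.
Proof. by rewrite /pe permKV. Qed.

Lemma peR x y : R x = R y -> pe x = pe y.
Proof. by rewrite /pe => /stvR ->. Qed.

Lemma phR x y : R x = R y -> ph x = ph y.
Proof. by rewrite /ph => /peR ->. Qed.

Lemma isrootR x y : R x = R y -> isroot x = isroot y.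
Proof. by rewrite !isrootE => ->. Qed.

Lemma pos_ph h : ~~ isroot h -> posD (ph h) < posD h.
Proof.
move=> nr; have := H5 (stv_behead nr).
by rewrite -/(ph h) (posR (R_stv h)).
Qed.

Definition up h := ~~ isroot h && (pe h == h).

Lemma sbehead h : (s h \in behead D) = up h.
Proof.
apply/idP/idP.
  move=> sb; have sD : s h \in D by rewrite Dcons inE sb orbT.
  have E : stv h = s h by rewrite -(stvR (Rs h)) stv_D.
  rewrite /up /pe E permK eqxx andbT isrootE -(Rs h).
  apply/negP=> /eqP E2; move: Hu; rewrite Dcons /= => /andP[nin _].
  by rewrite -E2 map_f in nin.
by case/andP=> nr /eqP pe_h; rewrite -{1}pe_h s_pe stv_behead.
Qed.

Lemma T_up x : (x \in T) = up x || up (a x).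
Proof. by rewrite HT !sbehead. Qed.

Lemma T_a x : (a x \in T) = (x \in T).
Proof. by rewrite !T_up aK orbC. Qed.

Fixpoint Wv n h := if n is n'.+1 then
  (if isroot h then [::] else rcons (Wv n' (ph h)) (idx (ph h))) else [::].

Lemma Wv_stable n m h : posD h < n -> posD h < m -> Wv n h = Wv m h.
Proof.
elim: n m h => [|n IH] [|m] h //= hn hm.
case: ifP => // nr; have := pos_ph (negbT nr) => lt.
by rewrite (IH m) // (leq_trans lt) // -ltnS.
Qed.

Definition WV h := Wv (size D) h.
Definition W h := rcons (WV h) (idx h).

Lemma WV_eq h : WV h = if isroot h then [::] else rcons (WV (ph h)) (idx (ph h)).
Proof.
rewrite /WV; have := posD_lt h; case: (size D) => // n hn.
have -> : Wv n.+1 h = if isroot h then [::] else rcons (Wv n (ph h)) (idx (ph h)) by [].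
case: ifP => // nr; congr rcons; apply: Wv_stable => //.
by rewrite (leq_trans (pos_ph (negbT nr))).
by rewrite (ltn_trans (pos_ph (negbT nr))).
Qed.

Lemma WV_R x y : R x = R y -> WV x = WV y.
Proof.
rewrite /WV; elim: (size D) x y => //= n IH x y Rxy.
by rewrite (isrootR Rxy) (phR Rxy).
Qed.

Definition td h := size (WV h).

Lemma td_root h : isroot h -> td h = 0.
Proof. by rewrite /td WV_eq => ->. Qed.

Lemma td_nroot h : ~~ isroot h -> td h = (td (ph h)).+1.
Proof. by rewrite /td WV_eq => /negPf ->; rewrite size_rcons. Qed.

Lemma tdR x y : R x = R y -> td x = td y.
Proof. by rewrite /td => /WV_R ->. Qed.

Lemma td_mono n x y : posD y < n -> posD x <= posD y -> td x <= td y.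
Proof.
elim: n x y => // n IH x y yn xy.
case rx: (isroot x); first by rewrite td_root.
have ry : ~~ isroot y.
  by apply: contraFN rx; rewrite /isroot => /eqP p0; move: xy; rewrite p0 leqn0.
move: xy; rewrite leq_eqVlt => /orP[/eqP/posRE/tdR->//|xy].
rewrite (td_nroot (negbT rx)) (td_nroot ry) ltnS.
have := H7 (stv_behead (negbT rx)) (stv_behead ry).
rewrite (posR (R_stv x)) (posR (R_stv y)) -/(ph x) -/(ph y) => /(_ xy) Hq.
apply: IH; first by rewrite (leq_trans (pos_ph ry)).
by case/orP: Hq => [/ltnW //|/andP[/eqP-> _]].
Qed.

Lemma td_edge h : td h <= (td (a h)).+1.
Proof.
case rh: (isroot h); first by rewrite td_root.
rewrite td_nroot ?rh // ltnS.
have := H6 (stv_behead (negbT rh)) (esym (R_stv h)).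
rewrite -/(ph h) => Hq.
apply: (td_mono (n := (posD (a h)).+1)) => //.
by case/orP: Hq => [/ltnW //|/andP[/eqP-> _]].
Qed.

Lemma reachS n : reach s a r n.+1 =
  reach s a r n :|: [set h | [exists h' in reach s a r n, fconnect s (a h') h]].
Proof. by []. Qed.

Lemma td_reach n h : h \in reach s a r n -> td h <= n.
Proof.
elim: n h => [|n IH] h.
  by rewrite /reach /= inE => /RP Rrh; rewrite td_root // isrootE Rrh.
rewrite reachS !inE => /orP[/IH /leqW //|/existsP[h' /andP[h'in /RP Rh]]].
rewrite -(tdR Rh); apply: (leq_trans (td_edge _)); rewrite aK ltnS.
exact: IH.
Qed.

Lemma reach_td_aux k h : posD h < k -> h \in reach s a r (td h).
Proof.
elim: k h => // k IH h hk.
case rh: (isroot h).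
  rewrite td_root // /reach /= inE; apply/RP.
  by move: rh; rewrite isrootE => /eqP.
rewrite td_nroot ?rh // reachS !inE; apply/orP; right.
apply/existsP; exists (ph h); rewrite IH /=; last first.
  by rewrite (leq_trans (pos_ph (negbT rh))).
by apply/RP; rewrite /ph aK R_pe.
Qed.

Lemma reach_td h : h \in reach s a r (td h).
Proof. exact: (reach_td_aux (posD_lt h)). Qed.

Lemma td_pos_aux k h : posD h < k -> td h <= posD h.
Proof.
elim: k h => // k IH h hk.
case rh: (isroot h); first by rewrite td_root.
rewrite td_nroot ?rh //; apply: leq_ltn_trans (pos_ph (negbT rh)).
by apply: IH; rewrite (leq_trans (pos_ph (negbT rh))).
Qed.

Lemma td_lt h : td h < #|H|.
Proof.
apply: leq_ltn_trans (td_pos_aux (posD_lt h)) _.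
exact: leq_trans (posD_lt h) (size_uniqR Hu).
Qed.

Lemma dist_td h : dist s a r h = td h.
Proof.
rewrite /dist; set p := fun n => h \in reach s a r n.
have hasp : has p (iota 0 #|H|).
  by apply/hasP; exists (td h); rewrite ?mem_iota ?td_lt //; apply: reach_td.
have kle : find p (iota 0 #|H|) <= td h.
  rewrite leqNgt; apply/negP => lt.
  have := before_find 0 lt; rewrite nth_iota ?td_lt // add0n /p reach_td.
  by [].
apply/eqP; rewrite eqn_leq kle /=.
have := nth_find 0 hasp; rewrite nth_iota ?(leq_ltn_trans kle (td_lt h)) // add0n.
exact: td_reach.
Qed.

Lemma c_R x y : fconnect s x y -> c x = c y.
Proof.
by move=> xy; apply: (fconnect_invariant _ xy) => z; rewrite /invariant /= cs eqxx.
Qed.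

Lemma c_a x : c (a x) = ~~ c x.
Proof. by have := ca x; case: (c (a x)); case: (c x). Qed.

Lemma parity_aux k h : posD h < k -> c h = c r (+) odd (td h).
Proof.
elim: k h => // k IH h hk.
case rh: (isroot h).
  rewrite td_root // addbF; apply/esym/c_R/RP.
  by move: rh; rewrite isrootE => /eqP.
rewrite td_nroot ?rh // oddS.
have -> : c h = c (pe h) by apply: c_R; apply/RP; rewrite R_pe.
rewrite -(aK (pe h)) -/(ph h) c_a (IH (ph h)); last by rewrite (leq_trans (pos_ph (negbT rh))).
by case: (c r); case: (odd _).
Qed.

Lemma parity h : c h = c r (+) odd (td h).
Proof. exact: parity_aux (posD_lt h). Qed.

Lemma td_a h : (td (a h) == (td h).+1) || (td h == (td (a h)).+1).
Proof.
have e1 := td_edge h; have e2 := td_edge (a h); rewrite aK in e2.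
have ne : td (a h) != td h.
  apply/negP=> /eqP E; have := ca h; rewrite (parity h) (parity (a h)) E.
  by rewrite eqxx.
move: e1 e2 ne; case: (ltngtP (td (a h)) (td h)) => // lt1 e1 e2 _.
  by rewrite orbC eqn_leq e1 lt1.
by rewrite eqn_leq e2 lt1.
Qed.

Lemma fcon_stv h : fconnect s (stv h) h.
Proof. by apply/RP; rewrite R_stv. Qed.

Lemma idx_s h : idx (s h) = if s h == stv h then 0 else (idx h).+1.
Proof.
rewrite /idx (stvR (Rs h)); case: ifP => [/eqP->|ne]; first exact: findex0.
have fc := fcon_stv h.
have ih := iter_findex fc; have im := findex_max fc.
have E : s h = iter (findex s (stv h) h).+1 s (stv h) by rewrite iterS ih.
rewrite E findex_iter //.
rewrite ltn_neqAle im andbT; apply/negP => /eqP Eo.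
by move: ne; rewrite E Eo (iter_order (@perm_inj _ s)) eqxx.
Qed.

Lemma up_nroot h : up h -> ~~ isroot h.
Proof. by case/andP. Qed.

Lemma up_pe h : up h -> pe h = h.
Proof. by case/andP=> _ /eqP. Qed.

Lemma up_ph h : up h -> ph h = a h.
Proof. by rewrite /ph => /up_pe ->. Qed.

Lemma up_td h : up h -> td h = (td (a h)).+1.
Proof. by move=> u; rewrite td_nroot ?up_nroot // up_ph. Qed.

Lemma up_WV h : up h -> WV h = W (a h).
Proof. by move=> u; rewrite WV_eq (negPf (up_nroot u)) up_ph. Qed.

Lemma up_both h : up h -> up (a h) -> False.
Proof.
move=> u1 u2; have := up_td u1; rewrite (up_td u2) aK => E.
have F : (td h).+2 <= td h by rewrite -E.
by rewrite ltnNge leqnSn in F.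
Qed.

Lemma up_stv x : ~~ isroot x -> s x = stv x -> up x.
Proof. by move=> nr E; rewrite /up nr /pe -E permK eqxx. Qed.

Lemma W_theta h : theta s a T h != r -> ltlex (W h) (W (theta s a T h)).
Proof.
rewrite /theta T_up; case uh: (up h) => /=.
  move=> ne; rewrite /W (WV_R (Rs (a h))) idx_s (up_WV uh) /W.
  case: ifP => [/eqP E|_]; last exact: ltlex_up.
  case ra: (isroot (a h)).
    by move: ne; rewrite E stv_root // eqxx.
  by have := up_both uh (up_stv (negbT ra) E).
case ua: (up (a h)) => /= ne.
  have E : s (a h) = stv (a h) by rewrite -s_pe up_pe.
  rewrite /W (WV_R (Rs (a h))) idx_s E eqxx (up_WV ua) aK.
  exact: ltlex_rcons.
rewrite /W (WV_R (Rs h)) idx_s; case: ifP => [/eqP E|_]; last by rewrite ltlex_rcons2.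
case rh: (isroot h); first by move: ne; rewrite E stv_root // eqxx.
by have := up_stv (negbT rh) E; rewrite uh.
Qed.

Lemma theta_inj : injective (theta s a T).
Proof.
move=> x y; rewrite /theta.
case xT: (x \in T); case yT: (y \in T) => E.
- by apply: (@perm_inj _ a); apply: (@perm_inj _ s).
- have E2 : a x = y by apply: (@perm_inj _ s).
  by move: yT; rewrite -E2 T_a xT.
- have E2 : x = a y by apply: (@perm_inj _ s).
  by move: xT; rewrite E2 T_a yT.
- exact: (@perm_inj _ s).
Qed.

Lemma td_root0 h : td h = 0 -> isroot h.
Proof. by case rh: (isroot h) => //; rewrite td_nroot ?rh. Qed.

Lemma tdS_inj x y : ~~ isroot x -> ~~ isroot y -> td x = td y -> td (ph x) = td (ph y).
Proof. by move=> rx ry; rewrite (td_nroot rx) (td_nroot ry) => -[]. Qed.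

Lemma L_aux n x y : posD y < n -> posD x < posD y -> td x = td y ->
  ltlex (WV x) (WV y).
Proof.
elim: n x y => // n IH x y yn xy E.
have rx : ~~ isroot x.
  apply/negP=> rx; have := td_root rx; rewrite E => /td_root0.
  by rewrite /isroot => /eqP p0; rewrite p0 in xy.
have ry : ~~ isroot y.
  by apply/negP=> ry; have := td_root ry; rewrite -E => /td_root0; rewrite (negPf rx).
have Eph := tdS_inj rx ry E.
have := H7 (stv_behead rx) (stv_behead ry).
rewrite (posR (R_stv x)) (posR (R_stv y)) !idxLE -/(ph x) -/(ph y) => /(_ xy) Hq.
rewrite (WV_eq x) (WV_eq y) (negPf rx) (negPf ry).
case/orP: Hq => [lt|/andP[/eqP pe il]].
  rewrite -!cats1; apply: ltlex_size; first exact: Eph.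
  apply: IH => //; rewrite (leq_trans (pos_ph ry)) //.
by rewrite (WV_R (posRE pe)) ltlex_rcons2.
Qed.

Lemma K_lem h : ~~ up h -> ~~ up (a h) -> td h = (td (a h)).+1 ->
  ltlex (W h) (W (a h)).
Proof.
move=> uh ua E.
have nr : ~~ isroot h by apply/negP=> /td_root; rewrite E.
have Eph : td (ph h) = td (a h) by move: E; rewrite td_nroot // => -[].
have := H6 (stv_behead nr) (esym (R_stv h)).
rewrite !idxLE -/(ph h) => Hq.
rewrite /W (WV_eq h) (negPf nr).
case/orP: Hq => [lt|/andP[/eqP pe il]].
  rewrite -!cats1 -catA; apply: ltlex_size; first exact: Eph.
  exact: (L_aux (n := (posD (a h)).+1)).
rewrite (WV_R (posRE pe)) -!cats1 -catA ltlex_catl /=.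
suff -> : idx (ph h) < idx (a h) by [].
rewrite ltn_neqAle il andbT; apply/negP => /eqP ie.
have st_eq : stv (ph h) = stv (a h) by apply: stvR; apply: posRE.
have : ph h = a h.
  rewrite -(iter_findex (fcon_stv (ph h))) -(iter_findex (fcon_stv (a h))).
  by rewrite -st_eq; move: ie; rewrite /idx st_eq => ->.
rewrite /ph => /(@perm_inj _ a) peh.
by move: uh; rewrite /up nr peh eqxx.
Qed.

Lemma Iset_geo : Iset s a r T = geo_in s a r.
Proof.
apply/setP => h; rewrite !inE /precS !(findex_lex theta_inj W_theta) !dist_td T_up.
case uh: (up h) => /=.
  by rewrite /W (up_WV uh) ltlex_rcons (up_td uh) ltnSn.
case ua: (up (a h)) => /=.
  rewrite /W (up_WV ua) aK (ltlex_asym (ltlex_rcons _ _)) (up_td ua) aK.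
  by rewrite ltnNge leqnSn.
case/orP: (td_a h) => /eqP E.
  have u2 : ~~ up (a (a h)) by rewrite aK uh.
  have E2 : td (a h) = (td (a (a h))).+1 by rewrite aK.
  have := K_lem (negbT ua) u2 E2; rewrite aK.
  by move/ltlex_asym ->; rewrite E ltnNge leqnSn.
by rewrite (K_lem (negbT uh) (negbT ua) E) E ltnSn.
Qed.

End Tree.

Section Inj.
Variables (H : finType) (s a : {perm H}) (r : H) (S T : {set H}).
Hypothesis afp : forall h, a h != h.
Hypothesis Tinj : injective (theta s a T).
Hypothesis Tall : forall h, fconnect (theta s a T) r h.
Hypothesis EI : Iset s a r S = Iset s a r T.

Local Notation thS := (theta s a S).
Local Notation thT := (theta s a T).

Lemma ordT : order thT r = #|H|.
Proof. by rewrite /order; apply: eq_card => x; rewrite !inE Tall. Qed.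

Definition Pt t := forall i, i <= t -> iter i thS r = iter i thT r.

Lemma distT i j : i < #|H| -> j < #|H| -> iter i thT r = iter j thT r -> i = j.
Proof.
rewrite -ordT => il jl E.
by rewrite -(findex_iter il) E findex_iter.
Qed.

Lemma ordS_gt t : t < #|H| -> Pt t -> t < order thS r.
Proof.
move=> tl P; rewrite ltnNge; apply/negP => ol.
have := looping_order thS r; rewrite /looping => /trajectP [i il E].
have o_le : order thS r <= t := ol.
rewrite (P _ o_le) (P i (leq_trans (ltnW il) o_le)) in E.
have := distT (leq_ltn_trans o_le tl) (ltn_trans il (leq_ltn_trans o_le tl)) E.
by move=> Ei; rewrite Ei ltnn in il.
Qed.

Lemma memb t : t < #|H| -> Pt t ->
  (iter t thT r \in S) = (iter t thT r \in T).
Proof.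
move=> tl P; set g := iter t thT r.
have oS := ordS_gt tl P.
have fTg : findex thT r g = t by rewrite findex_iter // ordT.
have fSg : findex thS r g = t by rewrite /g -(P t (leqnn t)) findex_iter.
set t' := findex thT r (a g).
have t'l : t' < #|H| by rewrite -ordT findex_max.
have iag : iter t' thT r = a g by rewrite iter_findex.
have tt' : t' != t.
  apply/negP=> /eqP E; have := afp g; rewrite -iag E -/g eqxx //.
have c1 : (findex thS r (a g) < findex thS r g) = (findex thT r (a g) < findex thT r g).
  rewrite fSg fTg -/t'.
  case: (ltngtP t' t) => [lt|gt|eq]; last by rewrite eq eqxx in tt'.
    have : findex thS r (a g) = t' by rewrite -iag -(P t' (ltnW lt)) findex_iter // (ltn_trans lt oS).
    by move=> ->.
  apply/negP=> fl.
  case fc: (fconnect thS r (a g)).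
    have e1 := iter_findex fc.
    rewrite (P _ (ltnW fl)) in e1.
    have := distT (ltn_trans fl tl) t'l; rewrite e1 iag => /(_ erefl) E.
    by rewrite -E ltnNge ltnW in gt.
  have : findex thS r (a g) = order thS r.
    by rewrite /findex memNindex ?size_orbit // -fconnect_orbit fc.
  by move=> E; rewrite E ltnNge ltnW in fl.
have c2 : (findex thS r g < findex thS r (a g)) = (findex thT r g < findex thT r (a g)).
  have ne1 : findex thS r (a g) != findex thS r g.
    apply/negP=> /eqP E.
    case fc: (fconnect thS r (a g)).
      have e1 := iter_findex fc; rewrite E fSg (P t (leqnn t)) -/g in e1.
      by have := afp g; rewrite -e1 eqxx.
    have : findex thS r (a g) = order thS r.
      by rewrite /findex memNindex ?size_orbit // -fconnect_orbit fc.
    by rewrite E fSg => Eo; rewrite Eo ltnn in oS.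
  rewrite fSg in c1 ne1 *; rewrite fTg -/t' in c1 *.
  move: c1 ne1 tt'; case: (ltngtP (findex thS r (a g)) t); case: (ltngtP t' t) => //.
have := congr1 (fun X : {set H} => g \in X) EI; rewrite /= !inE /precS c1 c2.
have ne : (findex thT r (a g) < findex thT r g) = ~~ (findex thT r g < findex thT r (a g)).
  by rewrite fTg -/t'; move: tt'; case: (ltngtP t' t).
rewrite ne; case: (g \in S); case: (g \in T); case: (findex thT r g < findex thT r (a g)) => //.
Qed.

Lemma Pall t : t < #|H| -> Pt t.
Proof.
elim: t => [|t IH] tl i.
  by rewrite leqn0 => /eqP->.
have P := IH (ltnW tl).
rewrite leq_eqVlt => /orP[/eqP->|il]; last exact: P.
rewrite !iterS (P t (leqnn t)) /theta memb //; exact: ltnW.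
Qed.

Lemma Iset_inj : S = T.
Proof.
apply/setP => h.
have fl : findex thT r h < #|H| by rewrite -ordT findex_max.
have := memb fl (Pall fl).
by rewrite iter_findex.
Qed.

End Inj.

Unset Implicit Arguments.
Set Strict Implicit.

Theorem mainTheorem15 (H : finType) (s a : {perm H}) (r : H) (S : {set H}) :
  is_map s a -> covered s a S -> bipartite s a ->
  (Iset s a r S = geo_in s a r <-> S = rbfs_tree s a r).
Proof.
move=> [aK afp conn] _ [c [cs ca]].
have [visf I] := @bfsD_inv H s a r aK #|H| [::] [:: r] [set x | fconnect s r x] set0
  (Inv_init s a r) (leqnn _).
set Df := (bfsD _ _ _ _ _ _ _).2 in I.
set Tf := (bfsD _ _ _ _ _ _ _).1 in I.
have ETf : Tf = rbfs_tree s a r by rewrite /Tf bfsD_fst.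
have Hc := Inv_cover conn I.
case: I => [[Hh Hsz] Hu _ HT I5 I6 I7 _]; rewrite cats0 in Hh Hsz Hu HT I5 I6 I7.
have H5 : forall y, y \in behead Df -> posD s Df (hy s a y) < posD s Df y.
  by move=> y yb; have [] := I5 y yb.
have H6 : forall y x, y \in behead Df -> R s x = R s y ->
  (posD s Df (hy s a y) < posD s Df (a x)) ||
  ((posD s Df (hy s a y) == posD s Df (a x)) &&
   (idxL s r Df (hy s a y) <= idxL s r Df (a x))).
  by move=> y x yb Rxy; apply: I6 => //; apply: Hc.
have IG := Iset_geo aK cs ca Hh Hsz Hu Hc HT H5 H6 I7.
have TI := theta_inj aK Hh Hsz Hu Hc HT.
have TA := orb_all TI (W_theta aK Hh Hsz Hu Hc HT H5).
rewrite -ETf; split.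
  by move=> E; apply: (@Iset_inj H s a r S Tf afp TA); rewrite E IG.
by move=> ->.
Qed.
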